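(* Let $k$ be a positive integer and let $G=G_1*_k G_2$ where, for each $i=1,2$, either $G_i=K_1$ or $\tau(G_i)=\overline{\tau}(G_i)=\kappa'(G_i)=\overline{\kappa'}(G_i)=k$. Then $\tau(G)=\overline{\tau}(G)=\kappa'(G)=\overline{\kappa'}(G)=k$.
   Context: Graphs are finite, loopless, possibly with multiple edges. $\kappa'(G)$ is the edge connectivity; $\tau(G)$ is the maximum number of edge-disjoint spanning trees of a connected graph $G$ ($\tau(K_1)=\infty$). $\overline{\kappa'}(G)=\max\{\kappa'(H): H\subseteq G\}$ and $\overline{\tau}(G)=\max\{\tau(H): H\subseteq G\}$, maxima over subgraphs. For vertex-disjoint connected graphs $G_1,G_2$ and a set $K$ of $k$ edges each having one end in $V(G_1)$ and the other in $V(G_2)$, the $k$-edge-join $G_1*_k G_2$ is the graph with vertex set $V(G_1)\cup V(G_2)$ and edge set $E(G_1)\cup E(G_2)\cup K$. *)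

(* Defs.v *)
(* Loopless multigraphs: a finite vertex type V, a finite
   edge type E, and endpoint maps src tgt : E -> V (orientation irrelevant).
   A subgraph is a pair (S, F) with S : {set V}, F : {set E}, every edge of F
   having both ends in S. *)
From mathcomp Require Import all_boot.
Set Implicit Arguments. Unset Strict Implicit. Unset Printing Implicit Defensive.

Section Graphs.
Variables (V E : finType) (src tgt : E -> V).

Definition adj (F : {set E}) : rel V := fun x y =>
  [exists e in F, ((src e == x) && (tgt e == y)) || ((src e == y) && (tgt e == x))].

Definition is_subgraph (S : {set V}) (F : {set E}) : bool :=
  [forall e in F, (src e \in S) && (tgt e \in S)].

Definition inside (S : {set V}) : {set E} :=
  [set e | (src e \in S) && (tgt e \in S)].

Definition connectedg (S : {set V}) (F : {set E}) : bool :=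
  [forall x in S, forall y in S, connect (adj F) x y].

(* acyclic edge set: no edge lies on a cycle, i.e. removing any edge e
   disconnects its two ends *)
Definition acyclic (T : {set E}) : bool :=
  [forall e in T, ~~ connect (adj (T :\ e)) (src e) (tgt e)].

Definition spanning_tree (S : {set V}) (F T : {set E}) : bool :=
  [&& T \subset F, connectedg S T & acyclic T].

Definition has_trees (S : {set V}) (F : {set E}) (k : nat) : bool :=
  [exists Tr : {ffun 'I_k -> {set E}},
     [forall i, spanning_tree S F (Tr i)] &&
     [forall i, forall j, (i != j) ==> [disjoint Tr i & Tr j]]].

(* Meaningful for
   graphs with at least two vertices (then each tree uses >= 1 edge, so the
   number is at most #|F|); tau(K_1) = oo is never used below. *)
Definition tau (S : {set V}) (F : {set E}) : nat :=
  \max_(k < #|F|.+1 | has_trees S F k) (k : nat).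

(* kappa'(S,F): edge connectivity = minimum size of an edge set whose removal
   disconnects (S,F) (for #|S| >= 2; removing F itself disconnects). *)
Definition kappa' (S : {set V}) (F : {set E}) : nat :=
  \big[minn/#|F|]_(C : {set E} | (C \subset F) && ~~ connectedg S (F :\: C)) #|C|.

Definition subg_of (S : {set V}) (F : {set E}) (P : {set V} * {set E}) : bool :=
  [&& P.1 \subset S, P.2 \subset F, is_subgraph P.1 P.2 & 1 < #|P.1|].

Definition taubar (S : {set V}) (F : {set E}) : nat :=
  \max_(P | subg_of S F P) tau P.1 P.2.

Definition kappabar (S : {set V}) (F : {set E}) : nat :=
  \max_(P | subg_of S F P) kappa' P.1 P.2.

Definition crossing (S : {set V}) : {set E} :=
  [set e | (src e \in S) != (tgt e \in S)].

End Graphs.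

(* Main.v *)
Require Import Defs.
From mathcomp Require Import all_boot zify.
Set Implicit Arguments. Unset Strict Implicit. Unset Printing Implicit Defensive.

Lemma connect_fun (T T' : finType) (f : T -> T') (e : rel T) (e' : rel T') :
  (forall x y, e x y -> connect e' (f x) (f y)) ->
  forall x y, connect e x y -> connect e' (f x) (f y).
Proof.
move=> H x y /connectP[s pth ->]; elim: s x pth => [|z s IH] x /=.
  by rewrite connect0.
by case/andP=> exz pth; apply: connect_trans (H _ _ exz) (IH _ pth).
Qed.

Lemma connect_pres (T : finType) (e : rel T) (p : T -> bool) :
  (forall x y, e x y -> p x = p y) -> forall x y, connect e x y -> p x = p y.
Proof.
move=> H x y /connectP[s pth ->]; elim: s x pth => [|z s IH] x //=.
by case/andP=> exz pth; rewrite (H _ _ exz); exact: IH.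
Qed.

Lemma disjP (T : finType) (A B : {set T}) :
  reflect (forall x, x \in A -> x \in B -> False) [disjoint A & B].
Proof.
apply: (iffP pred0P) => H.
  by move=> x xA xB; move: (H x); rewrite /= xA xB.
by move=> x /=; apply/negP => /andP[xA xB]; exact: H x xA xB.
Qed.

Lemma bigmin_le (I : eqType) (r : seq I) (P : pred I) (F : I -> nat) d i0 :
  i0 \in r -> P i0 -> \big[minn/d]_(i <- r | P i) F i <= F i0.
Proof.
elim: r => [|x r IH] //=; rewrite inE big_cons => /orP[/eqP<- -> | ir Pi].
  exact: geq_minl.
case: (P x); last exact: IH.
exact: leq_trans (geq_minr _ _) (IH ir Pi).
Qed.

Section G.
Variables (V E : finType) (src tgt : E -> V).

Lemma adj_sym (F : {set E}) : symmetric (adj src tgt F).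
Proof.
move=> x y; rewrite /adj; apply/existsP/existsP => -[e He]; exists e;
  by rewrite orbC.
Qed.

Lemma adj_csym (F : {set E}) x y : connect (adj src tgt F) x y = connect (adj src tgt F) y x.
Proof. exact: (sym_connect_sym (adj_sym F)). Qed.

Lemma adj_edge (F : {set E}) e : e \in F -> adj src tgt F (src e) (tgt e).
Proof. by move=> He; apply/existsP; exists e; rewrite He !eqxx. Qed.

Lemma adj_ind (F : {set E}) (P : V -> V -> Prop) : (forall x y, P x y -> P y x) ->
  (forall e, e \in F -> P (src e) (tgt e)) -> forall x y, adj src tgt F x y -> P x y.
Proof.
move=> Ps He x y /existsP[e /andP[eF /orP[/andP[/eqP<- /eqP<-]|/andP[/eqP<- /eqP<-]]]].
  exact: He.
by apply: Ps; exact: He.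
Qed.

Lemma connect_mono (F F' : {set E}) : F \subset F' ->
  forall x y, connect (adj src tgt F) x y -> connect (adj src tgt F') x y.
Proof.
move=> sFF'; apply: (connect_fun (f:=id)); apply: adj_ind.
  by move=> x y; rewrite adj_csym.
by move=> e eF; apply: connect1; apply: adj_edge; exact: (subsetP sFF').
Qed.

Lemma connectedgP (S : {set V}) (F : {set E}) : reflect (forall x y, x \in S -> y \in S -> connect (adj src tgt F) x y)
  (connectedg src tgt S F).
Proof.
apply: (iffP forall_inP) => H.
  by move=> x y xS yS; exact: (forall_inP (H x xS) y yS).
by move=> x xS; apply/forall_inP => y yS; exact: H.
Qed.

Lemma insideP (W : {set V}) e : e \in inside src tgt W -> (src e \in W) /\ (tgt e \in W).
Proof. by rewrite /inside inE => /andP. Qed.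

Lemma crossingC (W : {set V}) : crossing src tgt (~: W) = crossing src tgt W.
Proof. by apply/setP=> e; rewrite !inE; case: (src e \in W); case: (tgt e \in W). Qed.

Lemma tau_le_kappa (S : {set V}) (F : {set E}) : tau src tgt S F <= kappa' src tgt S F.
Proof.
rewrite /tau; apply/bigmax_leqP => m Hm.
rewrite /kappa'; apply: (big_ind (fun x => m <= x)).
- by have := ltn_ord m.
- by move=> a b ha hb; rewrite leq_min ha hb.
move=> C /andP[sCF ncon]; case/existsP: Hm => Tr /andP[/forallP Htr /forallP Hdis].
have hit : forall i, exists e, (e \in Tr i) && (e \in C).
  move=> i; case: (boolP [exists e, (e \in Tr i) && (e \in C)]) => [/existsP//|/existsPn He].
  exfalso; move/negP: ncon; apply.
  case/and3P: (Htr i) => sTF con _.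
  apply/connectedgP => x y xS yS; apply: (connect_mono (F:=Tr i)); last exact: (connectedgP _ _ con).
  apply/subsetP => e eT; rewrite inE (subsetP sTF _ eT) andbT; apply/negP => eC.
  by move: (He e); rewrite eT eC.
have [g Hg] := fin_all_exists hit.
have ginj : injective g.
  move=> i j eq; apply/eqP; apply/negPn/negP => ne.
  have := Hdis i; move/forallP/(_ j); rewrite ne /= => /disjP/(_ (g i)); apply.
    by case/andP: (Hg i).
  by rewrite eq; case/andP: (Hg j).
rewrite -[X in X <= _](card_ord m) -(card_imset _ ginj); apply: subset_leq_card.
by apply/subsetP => _ /imsetP[i _ ->]; case/andP: (Hg i).
Qed.

Lemma tau_pos (S : {set V}) (F : {set E}) m : tau src tgt S F = m -> 0 < m -> has_trees src tgt S F m.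
Proof.
move=> Ht m0; apply: contraT => nH.
have : tau src tgt S F <= m.-1.
  apply/bigmax_leqP => i Hi.
  have le : (i : nat) <= tau src tgt S F := @leq_bigmax_cond _ _ (fun j => nat_of_ord j) i Hi.
  rewrite Ht in le.
  have ne : (i : nat) != m by apply: contraNneq nH => <-.
  move: ne le; lia.
rewrite Ht; lia.
Qed.

Lemma cross_cut (W S : {set V}) (F : {set E}) x y : x \in S -> y \in S -> x \in W -> y \notin W ->
  kappa' src tgt S F <= #|crossing src tgt W|.
Proof.
move=> xS yS xW yW; rewrite /kappa'.
have := @bigmin_le _ (index_enum {set E}) (fun C : {set E} => (C \subset F) && ~~ connectedg src tgt S (F :\: C))
  (fun C : {set E} => #|C|) #|F| (F :&: crossing src tgt W) (mem_index_enum _).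
move=> H; apply: leq_trans (H _) _; last first.
  apply: subset_leq_card; exact: subsetIr.
rewrite subsetIl /=; apply/negP => /connectedgP/(_ x y xS yS) con.
suff : (x \in W) = (y \in W) by rewrite xW (negbTE yW).
apply: (connect_pres (p := fun v => v \in W)) con.
apply: adj_ind; first by move=> ? ? ->.
move=> e; rewrite !inE; case: (e \in F) => //=; rewrite andbT.
by rewrite negbK => /eqP.
Qed.

Lemma side_trees (W : {set V}) k :
  (#|W| = 1 \/ [/\ tau src tgt W (inside src tgt W) = k,
             taubar src tgt W (inside src tgt W) = k,
             kappa' src tgt W (inside src tgt W) = k &
             kappabar src tgt W (inside src tgt W) = k]) -> 0 < k ->
  has_trees src tgt W (inside src tgt W) k.
Proof.
case=> [/eqP/cards1P[u Wu] | [ht _ _ _]] k0; last exact: tau_pos.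
apply/existsP; exists [ffun => set0]; apply/andP; split; apply/forallP => i.
  rewrite ffunE /spanning_tree sub0set /=; apply/andP; split.
    by apply/connectedgP => x y; rewrite Wu !inE => /eqP-> /eqP->; exact: connect0.
  by apply/forall_inP => e; rewrite inE.
apply/forallP => j; apply/implyP => _; rewrite !ffunE.
by apply/disjP => e; rewrite inE.
Qed.

Lemma acyc_part (W : {set V}) (A B : {set E}) c e :
  spanning_tree src tgt W (inside src tgt W) A -> B \subset inside src tgt (~: W) ->
  c \in crossing src tgt W -> e \in A ->
  ~~ connect (adj src tgt ((A :|: B :|: [set c]) :\ e)) (src e) (tgt e).
Proof.
case/and3P => sA _ acA sB hc eA.
have [eW1 eW2] := insideP (subsetP sA e eA).
pose w := if src c \in W then src c else tgt c.
pose f := fun x => if x \in W then x else w.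
apply/negP => con.
suff con' : connect (adj src tgt (A :\ e)) (f (src e)) (f (tgt e)).
  rewrite /f eW1 eW2 in con'.
  by move: (forall_inP acA e eA); rewrite con'.
apply: (connect_fun (f:=f)) con.
apply: adj_ind; first by move=> x y; rewrite adj_csym.
move=> e'; rewrite !inE => /andP[ne /orP[/orP[e'A|e'B]|/eqP->]].
- have [h1 h2] := insideP (subsetP sA e' e'A).
  rewrite /f h1 h2; apply: connect1; apply: adj_edge; by rewrite !inE ne e'A.
- have [h1 h2] := insideP (subsetP sB e' e'B).
  rewrite inE in h1; rewrite inE in h2.
  by rewrite /f (negbTE h1) (negbTE h2) connect0.
move: hc; rewrite /f /w inE.
by case: (src c \in W); case: (tgt c \in W) => //= _; rewrite connect0.
Qed.

Lemma join_tree (W : {set V}) (A B : {set E}) c :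
  spanning_tree src tgt W (inside src tgt W) A ->
  spanning_tree src tgt (~: W) (inside src tgt (~: W)) B ->
  c \in crossing src tgt W ->
  spanning_tree src tgt [set: V] [set: E] (A :|: B :|: [set c]).
Proof.
move=> hA hB hc.
have hA' := hA; have hB' := hB.
case/and3P: hA' => sA cA acA; case/and3P: hB' => sB cB acB.
set T := A :|: B :|: [set c].
have cT : c \in T by rewrite !inE eqxx orbT.
have cu : forall z, (z == src c) || (z == tgt c) -> connect (adj src tgt T) z (src c).
  move=> z /orP[/eqP-> | /eqP->]; first exact: connect0.
  by rewrite adj_csym; apply: connect1; apply: adj_edge.
have ends : (src c \in W) != (tgt c \in W) by move: hc; rewrite inE.
have cx : forall x, connect (adj src tgt T) x (src c).
  move=> x; case: (boolP (x \in W)) => xW.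
    pose w := if src c \in W then src c else tgt c.
    have wW : w \in W.
      rewrite /w; case: ifP => [-> // | /negbT h].
      by move: ends; rewrite (negbTE h); case: (tgt c \in W).
    apply: connect_trans (cu w _); last by rewrite /w; case: (src c \in W); rewrite eqxx ?orbT.
    apply: (connect_mono (F := A)); first by apply/subsetP => e eA; rewrite !inE eA.
    exact: (connectedgP _ _ cA).
  pose w := if src c \in W then tgt c else src c.
  have wW : w \in ~: W.
    rewrite inE /w; case: ifP => [h | /negbT h //].
    by move: ends; rewrite h; case: (tgt c \in W).
  apply: connect_trans (cu w _); last by rewrite /w; case: (src c \in W); rewrite eqxx ?orbT.
  apply: (connect_mono (F := B)); first by apply/subsetP => e eB; rewrite !inE eB orbT.
  apply: (connectedgP _ _ cB) => //; by rewrite inE.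
apply/and3P; split; first exact: subsetT.
  apply/connectedgP => x y _ _; apply: connect_trans (cx x) _; rewrite adj_csym; exact: cx.
apply/forall_inP => e; rewrite !inE => /orP[/orP[eA|eB]|/eqP->].
- exact: acyc_part hA _ hc eA.
- have -> : T = B :|: A :|: [set c] by rewrite /T (setUC A).
  apply: (acyc_part (W := ~: W)) hB _ _ eB; last by rewrite crossingC.
  by rewrite setCK.
apply/negP => con.
suff : (src c \in W) = (tgt c \in W) by move/eqP: ends.
apply: (connect_pres (p := fun v => v \in W)) con.
apply: adj_ind; first by move=> ? ? ->.
move=> e'; rewrite !inE => /andP[ne /orP[/orP[e'A|e'B]|/eqP eq]].
- by have [-> ->] := insideP (subsetP sA e' e'A).
- have [h1 h2] := insideP (subsetP sB e' e'B).
  rewrite inE in h1; rewrite inE in h2; by rewrite (negbTE h1) (negbTE h2).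
by rewrite eq eqxx in ne.
Qed.

End G.

Theorem lemma3p8 (V E : finType) (src tgt : E -> V) (k : nat) (V1 : {set V})
  (loopless : forall e, src e != tgt e)
  (hk : 0 < k)
  (hV1 : V1 != set0) (hV2 : ~: V1 != set0)
  (hconn1 : connectedg src tgt V1 (inside src tgt V1))
  (hconn2 : connectedg src tgt (~: V1) (inside src tgt (~: V1)))
  (hcross : #|crossing src tgt V1| = k)
  (hG1 : #|V1| = 1 \/
         [/\ tau src tgt V1 (inside src tgt V1) = k,
             taubar src tgt V1 (inside src tgt V1) = k,
             kappa' src tgt V1 (inside src tgt V1) = k &
             kappabar src tgt V1 (inside src tgt V1) = k])
  (hG2 : #|~: V1| = 1 \/
         [/\ tau src tgt (~: V1) (inside src tgt (~: V1)) = k,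
             taubar src tgt (~: V1) (inside src tgt (~: V1)) = k,
             kappa' src tgt (~: V1) (inside src tgt (~: V1)) = k &
             kappabar src tgt (~: V1) (inside src tgt (~: V1)) = k]) :
  [/\ tau src tgt [set: V] [set: E] = k,
      taubar src tgt [set: V] [set: E] = k,
      kappa' src tgt [set: V] [set: E] = k &
      kappabar src tgt [set: V] [set: E] = k].
Proof.
have [x xV1] : exists x, x \in V1 by case/set0Pn: hV1 => x; exists x.
have [y yV2] : exists y, y \in ~: V1 by case/set0Pn: hV2 => y; exists y.
have yV1 : y \notin V1 by rewrite inE in yV2.
have kap_le : kappa' src tgt [set: V] [set: E] <= k.
  by rewrite -hcross; apply: (@cross_cut _ _ src tgt V1 [set: V] [set: E] x y); rewrite ?inE.
have [A HA] := existsP (side_trees hG1 hk).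
case/andP: HA => /forallP HAt /forallP HAd.
have [B HB] := existsP (side_trees hG2 hk).
case/andP: HB => /forallP HBt /forallP HBd.
pose c := fun j : 'I_k => enum_val (cast_ord (esym hcross) j).
have hc : forall j, c j \in crossing src tgt V1 by move=> j; exact: enum_valP.
have cinj : injective c by move=> i j /enum_val_inj/cast_ord_inj.
have inA : forall i e, e \in A i -> (src e \in V1) && (tgt e \in V1).
  move=> i e eA; case/and3P: (HAt i) => sA _ _.
  by have [-> ->] := insideP (subsetP sA e eA).
have inB : forall i e, e \in B i -> (src e \notin V1) && (tgt e \notin V1).
  move=> i e eB; case/and3P: (HBt i) => sB _ _.
  have [h1 h2] := insideP (subsetP sB e eB).
  by rewrite inE in h1; rewrite inE in h2; rewrite h1 h2.
have ht : has_trees src tgt [set: V] [set: E] k.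
  apply/existsP; exists [ffun j => A j :|: B j :|: [set c j]]; apply/andP; split;
    apply/forallP => i.
    by rewrite ffunE; apply: join_tree (HAt i) (HBt i) (hc i).
  apply/forallP => j; apply/implyP => nij; rewrite !ffunE.
  apply/disjP => e; rewrite !inE => /orP[/orP[eA|eB]|/eqP eC] /orP[/orP[eA'|eB']|/eqP eC'].
  - by move: (forallP (HAd i) j); rewrite nij /= => /disjP H; exact: H e eA eA'.
  - by move: (inA _ _ eA) (inB _ _ eB') => /andP[-> _] /andP[].
  - move: (hc j); rewrite -eC' inE; by case/andP: (inA _ _ eA) => -> ->.
  - by move: (inA _ _ eA') (inB _ _ eB) => /andP[-> _] /andP[].
  - by move: (forallP (HBd i) j); rewrite nij /= => /disjP H; exact: H e eB eB'.
  - move: (hc j); rewrite -eC' inE; case/andP: (inB _ _ eB) => h1 h2.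
    by rewrite (negbTE h1) (negbTE h2).
  - move: (hc i); rewrite -eC inE; by case/andP: (inA _ _ eA') => -> ->.
  - move: (hc i); rewrite -eC inE; case/andP: (inB _ _ eB') => h1 h2.
    by rewrite (negbTE h1) (negbTE h2).
  - by move: nij; rewrite (cinj i j) ?eqxx // -eC -eC'.
have tau_ge : k <= tau src tgt [set: V] [set: E].
  have kE : k < #|[set: E]|.+1 by rewrite ltnS -hcross; apply: subset_leq_card; exact: subsetT.
  exact: (@leq_bigmax_cond _ (fun i : 'I_#|[set: E]|.+1 => has_trees src tgt setT setT i)
            (fun i => nat_of_ord i) (Ordinal kE) ht).
have tau_kap := tau_le_kappa src tgt [set: V] [set: E].
have taueq : tau src tgt [set: V] [set: E] = k.
  by apply/eqP; rewrite eqn_leq tau_ge andbT; exact: leq_trans tau_kap kap_le.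
have kapeq : kappa' src tgt [set: V] [set: E] = k.
  by apply/eqP; rewrite eqn_leq kap_le -taueq tau_kap.
have subb : forall P, subg_of src tgt setT setT P ->
    kappa' src tgt P.1 P.2 <= k /\ tau src tgt P.1 P.2 <= k.
  move=> P /and4P[_ _ sub c2].
  have within : forall W : {set V}, P.1 \subset W -> subg_of src tgt W (inside src tgt W) P.
    move=> W sW; apply/and4P; split => //; apply/subsetP => e eP.
    have /andP[h1 h2] := forall_inP sub e eP.
    by rewrite /inside inE (subsetP sW _ h1) (subsetP sW _ h2).
  case: (boolP (P.1 \subset V1)) => s1.
    case: hG1 => [c1 | [_ tb _ kb]].
      by move: (subset_leq_card s1); rewrite c1; lia.
    split; [rewrite -kb | rewrite -tb].
      exact: (@leq_bigmax_cond _ _ (fun P => kappa' src tgt P.1 P.2) P (within _ s1)).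
    exact: (@leq_bigmax_cond _ _ (fun P => tau src tgt P.1 P.2) P (within _ s1)).
  case: (boolP (P.1 \subset ~: V1)) => s2.
    case: hG2 => [c1 | [_ tb _ kb]].
      by move: (subset_leq_card s2); rewrite c1; lia.
    split; [rewrite -kb | rewrite -tb].
      exact: (@leq_bigmax_cond _ _ (fun P => kappa' src tgt P.1 P.2) P (within _ s2)).
    exact: (@leq_bigmax_cond _ _ (fun P => tau src tgt P.1 P.2) P (within _ s2)).
  have [u uP uV] := subsetPn s1.
  have [v vP vV] := subsetPn s2.
  rewrite inE negbK in vV.
  have kp : kappa' src tgt P.1 P.2 <= k.
    by rewrite -hcross; apply: (@cross_cut _ _ src tgt V1 P.1 P.2 v u).
  by split => //; exact: leq_trans (tau_le_kappa _ _ _ _) kp.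
have whole : subg_of src tgt setT setT ([set: V], [set: E]).
  apply/and4P; split => //=.
    by apply/forall_inP => e _; rewrite !inE.
  apply/card_gt1P; exists x, y; split; rewrite ?inE //.
  by apply/eqP => exy; move: yV1; rewrite -exy xV1.
split => //.
  apply/eqP; rewrite eqn_leq; apply/andP; split.
    by apply/bigmax_leqP => P HP; case: (subb P HP).
  rewrite -{1}taueq.
  exact: (@leq_bigmax_cond _ _ (fun P => tau src tgt P.1 P.2) _ whole).
apply/eqP; rewrite eqn_leq; apply/andP; split.
  by apply/bigmax_leqP => P HP; case: (subb P HP).
rewrite -{1}kapeq.
exact: (@leq_bigmax_cond _ _ (fun P => kappa' src tgt P.1 P.2) _ whole).
Qed.
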